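(* For all $\sigma\in\Sigma_k$, $\tau\in\Sigma_l$ and $\epsilon\in Sh(k,l)$, the element $\epsilon^{-1}.(\mathbb T^\sigma\mathbb T^\tau)$ lies in $\mathbf H_{ho}$ and $$\epsilon^{-1}.(\mathbb T^\sigma\,\mathbb T^\tau)=\sum_{\zeta\in Sh(k,l)}\mathbb T^{\zeta^{-1}\circ(\sigma\otimes\tau)\circ\epsilon}.$$
   Context: A rooted forest is a finite graph each of whose components is a tree with a distinguished root; edges are oriented towards the roots, and $v\twoheadrightarrow w$ means there is an oriented path from $v$ to $w\ne v$. An ordered forest with $n$ vertices is a rooted forest with a total order on the vertices, identifying them with $\{1,\dots,n\}$; it is heap-ordered if $i\twoheadrightarrow j\Rightarrow i>j$. $\mathbf H_o$ (resp. $\mathbf H_{ho}$) is the vector space with basis ordered (resp. heap-ordered) forests, with product $\mathbb F\mathbb G$ = disjoint union where the vertices of $\mathbb G$ are shifted by the number of vertices of $\mathbb F$, and coproduct by admissible cuts $\Delta(\mathbb F)=\sum_{\vec v}\mathrm{Roo}_{\vec v}\mathbb F\otimes\mathrm{Lea}_{\vec v}\mathbb F$ ($\vec v$ a possibly empty set of pairwise $\twoheadrightarrow$-incomparable vertices; $\mathrm{Lea}_{\vec v}\mathbb F$ the subforest on $\vec v$ and all $w$ with $w\twoheadrightarrow v$ for some $v\in\vec v$; $\mathrm{Roo}_{\vec v}\mathbb F$ the subforest on the rest; orders restricted). For $\pi\in\Sigma_n$, $\pi.\mathbb F$ is the ordered forest with the same underlying rooted forest in which vertex $i$ is relabeled $\pi(i)$,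 extended linearly to the degree-$n$ part of $\mathbf H_o$. $(\sigma\circ\tau)(i)=\sigma(\tau(i))$; $(\sigma\otimes\tau)(i)=\sigma(i)$ for $i\le k$, $k+\tau(i-k)$ for $i>k$; $Sh(k,l)=\{\zeta\in\Sigma_{k+l}:\zeta^{-1}(1)<\dots<\zeta^{-1}(k),\ \zeta^{-1}(k+1)<\dots<\zeta^{-1}(k+l)\}$. $\mathbf{FQSym}$ has basis $\bigsqcup_n\Sigma_n$, product $\sigma\cdot\tau=\sum_{\epsilon\in Sh(k,l)}(\sigma\otimes\tau)\circ\epsilon$, coproduct $\Delta(\sigma)=\sum_k\sigma_1^{(k)}\otimes\sigma_2^{(k)}$ (standardizations of prefix and suffix of the word of $\sigma$). $S_{\mathbb F}=\{\sigma\in\Sigma_n:i\twoheadrightarrow j\Rightarrow\sigma^{-1}(i)>\sigma^{-1}(j)\}$, $\Theta(\mathbb F)=\sum_{\sigma\in S_{\mathbb F}}\sigma$; the restriction of $\Theta$ to $\mathbf H_{ho}$ is a Hopf algebra isomorphism onto $\mathbf{FQSym}$. For $\sigma\in\Sigma_n$, $\mathbb T^\sigma$ is the unique element of $\mathbf H_{ho}$ with $\Theta(\mathbb T^\sigma)=\sigma^{-1}$. *)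

(* Defs.v *)
From HB Require Import structures.
From mathcomp Require Import all_boot all_order all_algebra all_fingroup.
From Stdlib Require Import ClassicalEpsilon.
Set Implicit Arguments. Unset Strict Implicit. Unset Printing Implicit Defensive.
Import GRing.Theory.
Local Open Scope ring_scope.

(* Vertices of a forest with n vertices are 'I_n = {0,...,n-1} (0-based
   version of {1,...,n}; all order notions are preserved by i |-> i+1). *)

(* A parent map: p i = Some j means the edge i -> j (oriented towards the
   roots); p i = None means i is a root. *)
Definition pmap (n : nat) := {ffun 'I_n -> option 'I_n}.

Definition prel n (p : pmap n) : rel 'I_n := fun x y => p x == Some y.

Definition desc n (p : pmap n) (i j : 'I_n) : bool :=
  connect (prel p) i j && (i != j).

Definition forestb n (p : pmap n) : bool :=
  [forall i, forall j, prel p i j ==> ~~ connect (prel p) j i].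

Definition heapb n (p : pmap n) : bool :=
  forestb p && [forall i, forall j, desc p i j ==> (j < i)%N].

(* Degree-n part of the space spanned by parent maps; H_o (degree n) is the
   subspace of elements supported on forests, H_ho the subspace supported on
   heap-ordered forests. *)
Definition Hn (R : fieldType) n := {ffun pmap n -> R}.

Definition in_Ho (R : fieldType) n (x : Hn R n) : Prop :=
  forall p, x p != 0 -> forestb p.
Definition in_Hho (R : fieldType) n (x : Hn R n) : Prop :=
  forall p, x p != 0 -> heapb p.

(* disjoint union, vertices of the second forest shifted by k *)
Definition join k l (p1 : pmap k) (p2 : pmap l) : pmap (k + l) :=
  [ffun i => match split i with
             | inl a => omap (@lshift k l) (p1 a)
             | inr b => omap (@rshift k l) (p2 b)
             end].

Definition hmul (R : fieldType) k l (x : Hn R k) (y : Hn R l) : Hn R (k + l) :=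
  [ffun q => \sum_(p1 : pmap k) \sum_(p2 : pmap l)
                x p1 * y p2 * (join p1 p2 == q)%:R].

(* pi.F : vertex i relabeled pi(i) *)
Definition relabel n (pi : 'S_n) (p : pmap n) : pmap n :=
  [ffun j => omap pi (p (pi^-1%g j))].

Definition relabel_act (R : fieldType) n (pi : 'S_n) (x : Hn R n) : Hn R n :=
  [ffun q => \sum_(p : pmap n) x p * (relabel pi p == q)%:R].

Definition SF n (p : pmap n) : pred 'S_n :=
  fun s => [forall i, forall j, desc p i j ==> (s^-1%g j < s^-1%g i)%N].

(* Theta, with values in the degree-n part of FQSym (basis Sigma_n) *)
Definition theta (R : fieldType) n (x : Hn R n) : {ffun 'S_n -> R} :=
  [ffun s => \sum_(p : pmap n | forestb p) x p * (SF p s)%:R].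

(* T^sigma : the (unique) element of H_ho with Theta(T^sigma) = sigma^{-1} *)
Definition Tsig (R : fieldType) n (s : 'S_n) : Hn R n :=
  epsilon (inhabits (0 : Hn R n))
    (fun x => in_Hho x /\ theta x = [ffun u => ((u == s^-1)%g)%:R]).

(* composition (sigma o tau)(i) = sigma(tau(i)) *)
Definition permcomp n (s t : 'S_n) : 'S_n := (t * s)%g.

Definition tensor_fun k l (s : 'S_k) (t : 'S_l) (i : 'I_(k + l)) : 'I_(k + l) :=
  unsplit (match split i with inl a => inl (s a) | inr b => inr (t b) end).

Lemma tensor_fun_inj k l (s : 'S_k) (t : 'S_l) : injective (tensor_fun s t).
Proof.
move=> i j /(congr1 split); rewrite /tensor_fun !unsplitK => E.
rewrite -(splitK i) -(splitK j).
move: E; case: (split i) => a; case: (split j) => b //= [] /perm_inj -> //.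
Qed.

Definition ptensor k l (s : 'S_k) (t : 'S_l) : 'S_(k + l) :=
  perm (@tensor_fun_inj k l s t).

Definition shuffle k l : pred 'S_(k + l) :=
  fun z => [forall i : 'I_(k + l), forall j : 'I_(k + l),
              ((i < j)%N && ((j < k)%N || (k <= i)%N)) ==>
              (z^-1%g i < z^-1%g j)%N].
Arguments shuffle k l z : clear implicits.

(* Main.v *)
Require Import Defs.
From HB Require Import structures.
From mathcomp Require Import all_boot all_order all_algebra all_fingroup.
From Stdlib Require Import ClassicalEpsilon.
Set Implicit Arguments. Unset Strict Implicit. Unset Printing Implicit Defensive.
Import GRing.Theory.
Local Open Scope ring_scope.
Notation fpm := Defs.pmap.
Lemma conn_dec (T : finType) (r : rel T) (f : T -> nat) :
  (forall x y, r x y -> (f y < f x)%N) ->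
  forall x y, connect r x y -> x != y -> (f y < f x)%N.
Proof.
move=> H x y /connectP [s ps ->]; elim: s x ps => [|z s IH] x /=.
  by rewrite eqxx.
move=> /andP [rxz pzs] _.
have lt := H _ _ rxz.
case: (eqVneq z (last z s)) => [<-|ne] //.
exact: ltn_trans (IH z pzs ne) lt.
Qed.

Definition hrel n (p : fpm n) := forall v u, p v = Some u -> (u < v)%N.

Lemma heapP n (p : fpm n) : heapb p <-> hrel p.
Proof.
split.
  move=> /andP [/forallP F /forallP D] v u pv.
  have e : prel p v u by rewrite /prel pv.
  have := D v => /forallP /(_ u) /implyP; apply.
  rewrite /desc (connect1 e) /=.
  apply/negP=> /eqP vu; rewrite -vu in e.
  by have := F v => /forallP /(_ v) /implyP /(_ e); rewrite connect0.
move=> H.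
have dec : forall x y, prel p x y -> (nat_of_ord y < nat_of_ord x)%N.
  by move=> x y /eqP; apply: H.
apply/andP; split.
  apply/forallP=> i; apply/forallP=> j; apply/implyP=> e.
  apply/negP=> c.
  have lt := dec _ _ e.
  case: (eqVneq j i) => [ji|ne].
    by rewrite ji ltnn in lt.
  have := conn_dec dec c ne.
  by rewrite ltnNge (ltnW lt).
apply/forallP=> i; apply/forallP=> j; apply/implyP=> /andP [c ne].
exact: (conn_dec dec c ne).
Qed.

Lemma SFP n (p : fpm n) (s : 'S_n) : hrel p ->
  SF p s <-> (forall v u, p v = Some u -> (s^-1%g u < s^-1%g v)%N).
Proof.
move=> H; split.
  move=> /forallP F v u pv.
  have e : prel p v u by rewrite /prel pv.
  have := F v => /forallP /(_ u) /implyP; apply.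
  rewrite /desc (connect1 e) /=.
  by apply/negP=> /eqP vu; rewrite -vu in pv; have := H _ _ pv; rewrite ltnn.
move=> G; apply/forallP=> i; apply/forallP=> j; apply/implyP=> /andP [c ne].
apply: (conn_dec (f := fun x => val (s^-1%g x))) c ne.
by move=> x y /eqP; apply: G.
Qed.
Definition lexlt n (s t : 'S_n) : bool :=
  [exists i : 'I_n, [forall j : 'I_n, (j < i)%N ==> (s j == t j)] && (s i < t i)%N].

Lemma lexlt_irr n (s : 'S_n) : ~~ lexlt s s.
Proof. by apply/existsP=> [[i /andP [_]]]; rewrite ltnn. Qed.

Lemma lexlt_trans n (r s t : 'S_n) : lexlt r s -> lexlt s t -> lexlt r t.
Proof.
move=> /existsP [i /andP [/forallP Ei Li]] /existsP [i' /andP [/forallP Ei' Li']].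
apply/existsP; case: (ltngtP i i') => [lt|lt|eq].
- exists i; apply/andP; split.
    apply/forallP=> j; apply/implyP=> ji.
    rewrite (eqP (implyP (Ei j) ji)); apply: (implyP (Ei' j)).
    exact: ltn_trans ji lt.
  by rewrite -(eqP (implyP (Ei' i) lt)).
- exists i'; apply/andP; split.
    apply/forallP=> j; apply/implyP=> ji.
    rewrite (eqP (implyP (Ei j) (ltn_trans ji lt))).
    exact: (implyP (Ei' j) ji).
  by rewrite (eqP (implyP (Ei i') lt)).
- have ii : i = i' by apply: val_inj.
  subst i'; exists i; apply/andP; split; last exact: ltn_trans Li Li'.
  apply/forallP=> j; apply/implyP=> ji.
  by rewrite (eqP (implyP (Ei j) ji)) (eqP (implyP (Ei' j) ji)).
Qed.

Definition rk n (t : 'S_n) := #|[pred s : 'S_n | lexlt s t]|.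

Lemma rk_lt n (s t : 'S_n) : lexlt s t -> (rk s < rk t)%N.
Proof.
move=> st; apply: proper_card; apply/properP; split.
  by apply/subsetP=> r; rewrite !inE => rs; apply: lexlt_trans rs st.
by exists s; rewrite !inE ?st ?lexlt_irr.
Qed.

Definition cand n (t : 'S_n) (v u : 'I_n) := (u < v)%N && (t^-1%g u < t^-1%g v)%N.

Definition phi n (t : 'S_n) : fpm n :=
  [ffun v => [pick u | cand t v u &&
       [forall u', cand t v u' ==> (t^-1%g u' <= t^-1%g u)%N]]].

Lemma phiP n (t : 'S_n) v :
  (forall u, phi t v = Some u -> cand t v u /\
      forall u', cand t v u' -> (t^-1%g u' <= t^-1%g u)%N) /\
  (phi t v = None -> forall u, ~~ cand t v u).
Proof.
rewrite /phi ffunE; case: pickP => [u /andP [cu /forallP M]|N]; split => //.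
- by move=> u' [<-]; split => // u'' c; apply: (implyP (M u'')).
- move=> _ u; apply/negP=> cu.
  case: (@arg_maxnP _ u (cand t v) (fun x => nat_of_ord (t^-1%g x)) cu) => m cm Mm.
  have := N m; rewrite cm /=; move/negP; apply; apply/forallP=> u'.
  by apply/implyP; apply: Mm.
Qed.

Lemma phi_heap n (t : 'S_n) : hrel (phi t).
Proof. by move=> v u /(proj1 (phiP t v)) [/andP []]. Qed.

Lemma phi_SF n (t : 'S_n) : SF (phi t) t.
Proof.
apply: (proj2 (SFP t (@phi_heap _ t))) => v u /(proj1 (phiP t v)) [/andP [] _ //].
Qed.

Lemma phi_lex n (t s : 'S_n) : SF (phi t) s -> s = t \/ lexlt s t.
Proof.
move=> /(SFP s (@phi_heap _ t)) Hs.
case: (eqVneq s t) => [->|ne]; [by left|right].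
have [i0 ni0] : exists i, s i != t i.
  apply/existsP; apply/negP=> /forallP A; move/eqP: ne; apply.
  by apply/permP=> x; apply/eqP.
case: (@arg_minnP _ i0 (fun i => s i != t i) (fun i => nat_of_ord i) ni0) => i ni Mi.
have pre : forall j : 'I_n, (j < i)%N -> s j = t j.
  move=> j ji; apply/eqP; apply/negPn/negP=> nj.
  by have := Mi j nj; rewrite leqNgt ji.
apply/existsP; exists i; apply/andP; split.
  by apply/forallP=> j; apply/implyP=> ji; rewrite pre.
set a := t i; set b := s i.
have ab : a != b by rewrite eq_sym.
rewrite ltn_neqAle; apply/andP; split; first by rewrite eq_sym; exact: ab.
rewrite leqNgt; apply/negP=> lt_ab.
set j := t^-1%g b.
have tj : t j = b by rewrite /j permKV.
have ij : (i < j)%N.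
  case: (ltngtP i j) => // [ji|ji].
  - have := pre _ ji; rewrite tj => sj.
    have : j = i by apply: (perm_inj (s := s)); rewrite sj.
    by move=> e; rewrite e ltnn in ji.
  - have e : i = j by apply: val_inj.
    by move: ab; rewrite /a e tj eqxx.
have ca : cand t b a by rewrite /cand lt_ab /a permK.
case E : (phi t b) => [m|].
  have [/andP [mb mj] Mm] := proj1 (phiP t b) m E.
  have := Hs _ _ E; rewrite /b permK => q_i.
  have := pre _ q_i; rewrite permKV => tq.
  have tm : t^-1%g m = s^-1%g m by rewrite {1}tq permK.
  have := Mm a ca; rewrite /a permK tm leqNgt.
  by rewrite (_ : (s^-1)%g m < i = true)%N.
by have := proj2 (phiP t b) E a; rewrite ca.
Qed.
Lemma phi_inj n : injective (@phi n).
Proof.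
move=> t t' E.
have A1 : SF (phi t) t' by rewrite E phi_SF.
have A2 : SF (phi t') t by rewrite -E phi_SF.
case: (phi_lex A1) => [//|h1].
case: (phi_lex A2) => [//|h2].
by have := lexlt_irr t; rewrite (lexlt_trans h2 h1).
Qed.

Definition oh n (v : 'I_n) (o : option 'I_n) : bool :=
  if o is Some u then (u < v)%N else true.

Lemma count_lt_iota v m : count (fun x => x < v)%N (iota 0 m) = minn v m.
Proof.
elim: m => [|m IH]; first by rewrite minn0.
rewrite -addn1 iotaD count_cat IH /= add0n addn0.
case: (ltnP m v) => h.
  by rewrite addn1 (elimT minn_idPr h).
by rewrite addn0 (elimT minn_idPl (leq_trans h (leq_addr 1 m))).
Qed.

Lemma card_oh n (v : 'I_n) : #|[pred o | oh v o]| = v.+1.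
Proof.
rewrite cardE /enum_mem /= -enumT enumT unlock /=.
congr S; rewrite size_filter count_map -enumT.
have -> : forall P : pred 'I_n, P =1 (fun x : 'I_n => (x < v)%N) ->
    count P (enum 'I_n) = count (fun x => x < v)%N (map val (enum 'I_n)).
  by move=> P HP; rewrite count_map; apply: eq_count.
  rewrite val_enum_ord count_lt_iota.
  exact: (elimT minn_idPl (ltnW (ltn_ord v))).
by [].
Qed.
Lemma card_heap n : #|[pred p : fpm n | heapb p]| = n`!.
Proof.
have E : [pred p : fpm n | heapb p] =i family (fun v => [pred o | oh v o]).
  move=> p; rewrite !inE; apply/idP/familyP.
    move=> /heapP H v; rewrite inE /oh; case E : (p v) => [u|] //.
    exact: H _ _ E.
  move=> H; apply/heapP=> v u E; have := H v; by rewrite inE /oh E.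
rewrite (eq_card E) card_family.
rewrite foldrE big_map big_enum /=.
rewrite (eq_bigr (fun i : 'I_n => (nat_of_ord i).+1)); last by move=> i _; rewrite card_oh.
rewrite -(big_mkord xpredT (fun i => i.+1)) fact_prod big_add1 /=.
by [].
Qed.

Lemma phi_surj n (p : fpm n) : heapb p -> exists t, phi t = p.
Proof.
move=> hp.
have sub : codom (@phi n) \subset [pred p : fpm n | heapb p].
  apply/subsetP=> q /codomP [t ->]; rewrite inE; apply/heapP; exact: phi_heap.
have cd : #|codom (@phi n)| = #|[pred p : fpm n | heapb p]|.
  by rewrite card_codom; [rewrite card_heap card_Sn | exact: (@phi_inj n)].
have := (subset_cardP cd sub) p; rewrite inE hp => /codomP [t ->].
by exists t.
Qed.
Section Lin.
Variable R : fieldType.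

Lemma Hho0 n : in_Hho (0 : Hn R n).
Proof. by move=> p; rewrite ffunE eqxx. Qed.

Lemma HhoB n (x y : Hn R n) : in_Hho x -> in_Hho y -> in_Hho (x - y).
Proof.
move=> hx hy p; rewrite !ffunE.
case: (eqVneq (x p) 0) => [->|]; last by move=> /hx.
case: (eqVneq (y p) 0) => [->|]; last by move=> /hy.
by rewrite subrr eqxx.
Qed.

Lemma HhoD n (x y : Hn R n) : in_Hho x -> in_Hho y -> in_Hho (x + y).
Proof.
move=> hx hy p; rewrite !ffunE.
case: (eqVneq (x p) 0) => [->|]; last by move=> /hx.
case: (eqVneq (y p) 0) => [->|]; last by move=> /hy.
by rewrite addr0 eqxx.
Qed.

Lemma Hho_sum n (I : finType) (P : pred I) (F : I -> Hn R n) :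
  (forall i, P i -> in_Hho (F i)) -> in_Hho (\sum_(i | P i) F i).
Proof.
move=> H; elim/big_rec: _ => [|i y Pi hy]; first exact: Hho0.
exact: HhoD (H i Pi) hy.
Qed.

Lemma theta_Hho n (x : Hn R n) s : in_Hho x ->
  theta x s = \sum_(p : fpm n) x p * (SF p s)%:R.
Proof.
move=> hx; rewrite ffunE big_mkcond; apply: eq_bigr => p _.
case: (boolP (forestb p)) => // nf.
case: (eqVneq (x p) 0) => [->|/hx /andP [] f]; first by rewrite mul0r.
by rewrite f in nf.
Qed.

Lemma thetaB n (x y : Hn R n) : theta (x - y) = theta x - theta y.
Proof.
apply/ffunP=> s; rewrite !ffunE -sumrB; apply: eq_bigr => p _.
by rewrite !ffunE mulrBl.
Qed.

Lemma thetaD n (x y : Hn R n) : theta (x + y) = theta x + theta y.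
Proof.
apply/ffunP=> s; rewrite !ffunE -big_split; apply: eq_bigr => p _.
by rewrite !ffunE mulrDl.
Qed.

Lemma theta0 n : theta (0 : Hn R n) = 0.
Proof. by apply/ffunP=> s; rewrite !ffunE big1 // => p _; rewrite ffunE mul0r. Qed.

Lemma theta_sum n (I : finType) (P : pred I) (F : I -> Hn R n) :
  theta (\sum_(i | P i) F i) = \sum_(i | P i) theta (F i).
Proof. exact: (big_morph _ (@thetaD n) (@theta0 n)). Qed.

Lemma theta_inj n (x : Hn R n) : in_Hho x -> theta x = 0 -> x = 0.
Proof.
move=> hx th; apply/ffunP=> p0; rewrite ffunE.
apply/eqP; apply/negPn/negP=> nz.
have [t0 pt0] := phi_surj (hx _ nz).
have c0 : x (phi t0) != 0 by rewrite pt0.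
case: (@arg_maxnP _ t0 (fun t => x (phi t) != 0) (@rk n) c0) => t ct Mt.
have := congr1 (fun f : {ffun 'S_n -> R} => f t) th; rewrite theta_Hho // ffunE.
rewrite (bigD1 (phi t)) //= big1 ?phi_SF ?addr0 ?mulr1; first by move/eqP; rewrite (negbTE ct).
move=> q nq; case: (eqVneq (x q) 0) => [->|xq]; first by rewrite mul0r.
have [t' qt'] := phi_surj (hx _ xq).
case: (boolP (SF q t)) => [sq|]; last by rewrite mulr0.
rewrite -qt' in sq; case: (phi_lex sq) => [e|lt].
  by rewrite -qt' -e eqxx in nq.
have := Mt t'; rewrite qt' xq => /(_ isT) h.
by have := leq_trans (rk_lt lt) h; rewrite ltnn.
Qed.

Definition dlt n (s : 'S_n) : {ffun 'S_n -> R} := [ffun u => ((u == s)%g)%:R].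
Definition eF n (F : fpm n) : Hn R n := [ffun q => (q == F)%:R].

Lemma Tsig_spec n (s : 'S_n) :
  (exists x, in_Hho x /\ theta x = dlt (s^-1)%g) ->
  in_Hho (Tsig R s) /\ theta (Tsig R s) = dlt (s^-1)%g.
Proof. move=> E; exact: (epsilon_spec (inhabits (0 : Hn R n)) (fun x => in_Hho x /\ theta x = dlt (s^-1)%g) E). Qed.

Lemma Tsig_ok n (s : 'S_n) : in_Hho (Tsig R s) /\ theta (Tsig R s) = dlt (s^-1)%g.
Proof.
apply: Tsig_spec; move: (s^-1)%g => t.
suff H : forall m (t : 'S_n), (rk t < m)%N -> exists x, in_Hho x /\ theta x = dlt t.
  exact: H (rk t).+1 t (ltnSn _).
elim=> // m IH {}t ltm.
set F := phi t.
have hF : heapb F by apply/heapP; exact: phi_heap.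
pose P := fun σ => SF F σ && (σ != t).
have IHs : forall σ, P σ -> in_Hho (Tsig R σ^-1) /\ theta (Tsig R σ^-1) = dlt σ.
  move=> σ /andP [sf ne]; rewrite -{3}(invgK σ); apply: Tsig_spec; rewrite invgK.
  apply: IH; case: (phi_lex sf) => [e|lt]; first by rewrite e eqxx in ne.
  exact: leq_trans (rk_lt lt) ltm.
exists (eF F - \sum_(σ | P σ) Tsig R σ^-1); split.
  apply: HhoB; last by apply: Hho_sum => σ /IHs [].
  by move=> q; rewrite ffunE; case: (eqVneq q F) => [-> _ //|_]; rewrite eqxx.
rewrite thetaB theta_sum; apply/ffunP=> u; rewrite !ffunE sum_ffunE.
rewrite (eq_bigr (fun σ => ((u == σ)%g)%:R)); last first.
  by move=> σ Pσ; rewrite (proj2 (IHs σ Pσ)) ffunE.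
rewrite (bigD1 F) //= ?(proj1 (andP hF)) // big1 => [|q /andP [_ nq]]; last first.
  by rewrite ffunE (negbTE nq) mul0r.
rewrite ffunE eqxx mul1r addr0.
case: (eqVneq u t) => [->|nut].
  rewrite phi_SF big1 ?subr0 // => σ /andP [_ nσ].
  by rewrite eq_sym (negbTE nσ).
have Hs : forall σ, P σ && (σ != u) -> ((u == σ)%g)%:R = (0 : R).
  by move=> σ /andP [_ nσ]; rewrite eq_sym (negbTE nσ).
case: (boolP (SF F u)) => sfu.
  rewrite (bigD1 u) /=; last by rewrite /P nut sfu.
  by rewrite big1 // eqxx addr0 subrr.
rewrite big1 ?subr0 // => σ Pσ.
case: (eqVneq u σ) => // e; by move: Pσ; rewrite /P -e (negbTE sfu).
Qed.
End Lin.
Lemma splitL k l (a : 'I_k) : split (lshift l a) = inl a.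
Proof. exact: (unsplitK (inl _ a)). Qed.
Lemma splitR k l (b : 'I_l) : split (rshift k b) = inr b.
Proof. exact: (unsplitK (inr _ b)). Qed.

Lemma ordLR k l (P : 'I_(k + l) -> Prop) :
  (forall a, P (lshift l a)) -> (forall b, P (rshift k b)) -> forall x, P x.
Proof. by move=> HL HR x; rewrite -(splitK x); case: (split x) => /=. Qed.

Lemma joinL k l (p1 : fpm k) (p2 : fpm l) a :
  join p1 p2 (lshift l a) = omap (@lshift k l) (p1 a).
Proof. by rewrite ffunE splitL. Qed.
Lemma joinR k l (p1 : fpm k) (p2 : fpm l) b :
  join p1 p2 (rshift k b) = omap (@rshift k l) (p2 b).
Proof. by rewrite ffunE splitR. Qed.

Lemma join_heap k l (p1 : fpm k) (p2 : fpm l) :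
  hrel p1 -> hrel p2 -> hrel (join p1 p2).
Proof.
move=> h1 h2; apply: ordLR => [a|b] u.
  rewrite joinL; case E : (p1 a) => [w|] //= [<-] /=; exact: h1 E.
rewrite joinR; case E : (p2 b) => [w|] //= [<-] /=; rewrite ltn_add2l; exact: h2 E.
Qed.

Lemma relabelE n (pi : 'S_n) (p : fpm n) v :
  relabel pi p (pi v) = omap pi (p v).
Proof. by rewrite ffunE permK. Qed.

Lemma relabel_heap n (pi : 'S_n) (p : fpm n) :
  (forall v u, p v = Some u -> (pi u < pi v)%N) -> hrel (relabel pi p).
Proof.
move=> H j w; rewrite -(permKV pi j) relabelE.
by case E : (p (pi^-1%g j)) => [u|] //= [<-]; apply: H.
Qed.

Lemma SF_relabel n (pi : 'S_n) (p : fpm n) u :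
  hrel p -> hrel (relabel pi p) -> SF (relabel pi p) u = SF p (u * pi^-1)%g.
Proof.
move=> h hr; apply/idP/idP.
  move=> /(SFP _ hr) H; apply/(SFP _ h) => v w E.
  have := H (pi v) (pi w); rewrite relabelE E => /(_ erefl).
  by rewrite invMg invgK !permM.
move=> /(SFP _ h) H; apply/(SFP _ hr) => j w.
rewrite -(permKV pi j) relabelE; case E : (p (pi^-1%g j)) => [w'|] //= [<-].
by have := H _ _ E; rewrite invMg invgK !permM.
Qed.
Lemma ptensorL k l (s : 'S_k) (t : 'S_l) a : ptensor s t (lshift l a) = lshift l (s a).
Proof. by rewrite permE /tensor_fun splitL. Qed.
Lemma ptensorR k l (s : 'S_k) (t : 'S_l) b : ptensor s t (rshift k b) = rshift k (t b).
Proof. by rewrite permE /tensor_fun splitR. Qed.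

Lemma ptensorM k l (a c : 'S_k) (b d : 'S_l) :
  (ptensor a b * ptensor c d)%g = ptensor (a * c)%g (b * d)%g.
Proof.
apply/permP; apply: ordLR => x; by rewrite !permM !(ptensorL, ptensorR) !permM.
Qed.

Lemma ptensor1 k l : ptensor (1%g : 'S_k) (1%g : 'S_l) = 1%g.
Proof. apply/permP; apply: ordLR => x; by rewrite !(ptensorL, ptensorR) !perm1. Qed.

Lemma ptensorV k l (s : 'S_k) (t : 'S_l) : (ptensor s t)^-1%g = ptensor s^-1%g t^-1%g.
Proof.
have h := ptensorM s s^-1%g t t^-1%g; rewrite !mulgV ptensor1 in h.
by rewrite -[RHS](mulKg (ptensor s t)) h mulg1.
Qed.

Lemma shufL k l (z : 'S_(k + l)) a b : shuffle k l z ->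
  (z^-1%g (lshift l a) < z^-1%g (lshift l b))%N = (a < b)%N.
Proof.
move=> /forallP H.
have M : forall a b : 'I_k, (a < b)%N -> (z^-1%g (lshift l a) < z^-1%g (lshift l b))%N.
  move=> a' b' ab; have := H (lshift l a') => /forallP /(_ (lshift l b')) /implyP; apply.
  by rewrite /= ab ltn_ord.
case: (ltngtP a b) => [ab|ba|e]; first exact: M.
  by apply/negbTE; rewrite -leqNgt; apply: ltnW; apply: M.
have -> : a = b by apply: val_inj.
by rewrite ltnn.
Qed.

Lemma shufR k l (z : 'S_(k + l)) a b : shuffle k l z ->
  (z^-1%g (rshift k a) < z^-1%g (rshift k b))%N = (a < b)%N.
Proof.
move=> /forallP H.
have M : forall a b : 'I_l, (a < b)%N -> (z^-1%g (rshift k a) < z^-1%g (rshift k b))%N.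
  move=> a' b' ab; have := H (rshift k a') => /forallP /(_ (rshift k b')) /implyP; apply.
  by rewrite /= ltn_add2l ab leq_addr orbT.
case: (ltngtP a b) => [ab|ba|e]; first exact: M.
  by apply/negbTE; rewrite -leqNgt; apply: ltnW; apply: M.
have -> : a = b by apply: val_inj.
by rewrite ltnn.
Qed.

Lemma SF_join k l (p1 : fpm k) (p2 : fpm l) (z : 'S_(k + l)) r1 r2 :
  hrel p1 -> hrel p2 -> shuffle k l z ->
  SF (join p1 p2) (z * ptensor r1 r2)%g = SF p1 r1 && SF p2 r2.
Proof.
move=> h1 h2 sz; have hj := join_heap h1 h2.
have E : forall x, (z * ptensor r1 r2)^-1%g x = z^-1%g ((ptensor r1^-1 r2^-1)%g x).
  by move=> x; rewrite invMg permM ptensorV.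
apply/idP/andP.
  move=> /(SFP _ hj) H; split.
    apply/(SFP _ h1) => a w pa.
    have := H (lshift l a) (lshift l w); rewrite joinL pa => /(_ erefl).
    by rewrite !E !ptensorL shufL.
  apply/(SFP _ h2) => a w pa.
  have := H (rshift k a) (rshift k w); rewrite joinR pa => /(_ erefl).
  by rewrite !E !ptensorR shufR.
move=> [/(SFP _ h1) H1 /(SFP _ h2) H2]; apply/(SFP _ hj); apply: ordLR => a u.
  rewrite joinL; case pa : (p1 a) => [w|] //= [<-].
  by rewrite !E !ptensorL shufL //; apply: H1.
rewrite joinR; case pa : (p2 a) => [w|] //= [<-].
by rewrite !E !ptensorR shufR //; apply: H2.
Qed.
Lemma card_lt n m : #|[pred y : 'I_n | (y < m)%N]| = minn m n.
Proof.
rewrite cardE /enum_mem size_filter -enumT.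
have -> : count (mem [pred y : 'I_n | (y < m)%N]) (enum 'I_n)
    = count (fun x => x < m)%N (map val (enum 'I_n)).
  by rewrite count_map; apply: eq_count.
by rewrite val_enum_ord count_lt_iota.
Qed.

Lemma mono_le n (f : 'S_n) : (forall c d, (f c < f d)%N = (c < d)%N) ->
  forall i : 'I_n, (i <= f i)%N.
Proof.
move=> M i.
have := subset_leq_card (A := f @: [set c : 'I_n | (c < i)%N])
                        (B := [pred y : 'I_n | (y < f i)%N]) _.
  rewrite card_imset; last exact: perm_inj.
  rewrite (_ : #|[set c : 'I_n | (c < i)%N]| = #|[pred c : 'I_n | (c < i)%N]|);
    last by apply: eq_card => c; rewrite !inE.
  rewrite !card_lt.
  rewrite (elimT minn_idPl (ltnW (ltn_ord i))) (elimT minn_idPl (ltnW (ltn_ord (f i)))).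
  apply.
apply/subsetP=> y /imsetP [c]; rewrite inE => ci ->; by rewrite inE M.
Qed.

Lemma mono_id n (f : 'S_n) : (forall c d, (f c < f d)%N = (c < d)%N) -> f = 1%g.
Proof.
move=> M.
have M' : forall c d, (f^-1%g c < f^-1%g d)%N = (c < d)%N.
  by move=> c d; rewrite -M !permKV.
apply/permP=> i; rewrite perm1; apply/val_inj/eqP; rewrite eqn_leq.
rewrite (mono_le M) andbT.
by have := mono_le M' (f i); rewrite permK.
Qed.

Lemma shuf_uniq k l (z : 'S_(k + l)) a b :
  shuffle k l z -> shuffle k l (z * ptensor a b)%g -> a = 1%g /\ b = 1%g.
Proof.
move=> sz sw.
have E : forall x, (z * ptensor a b)^-1%g x = z^-1%g ((ptensor a^-1 b^-1)%g x).
  by move=> x; rewrite invMg permM ptensorV.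
split.
  suff : a^-1%g = 1%g by move=> h; rewrite -(invgK a) h invg1.
  apply: mono_id => c d.
  by rewrite -(shufL _ _ sz) -!(ptensorL _ b^-1%g) -!E (shufL _ _ sw).
suff : b^-1%g = 1%g by move=> h; rewrite -(invgK b) h invg1.
apply: mono_id => c d.
by rewrite -(shufR _ _ sz) -!(ptensorR a^-1%g) -!E (shufR _ _ sw).
Qed.
Section Decomp.
Variables (k l : nat) (v : 'S_(k + l)).

Definition S1 (x : 'I_(k + l)) : bool := (v x < k)%N.
Definition rk1 (x : 'I_(k + l)) := #|[pred y | S1 y && (y < x)%N]|.
Definition rk2 (x : 'I_(k + l)) := #|[pred y | ~~ S1 y && (y < x)%N]|.
Definition zval x := if S1 x then rk1 x else (k + rk2 x)%N.

Lemma cardS1 : #|[pred x | S1 x]| = k.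
Proof.
rewrite -(card_imset _ (@perm_inj _ v)).
rewrite (_ : v @: _ = [set y : 'I_(k + l) | (y < k)%N]).
  rewrite (_ : #|[set y : 'I_(k + l) | (y < k)%N]| = #|[pred y : 'I_(k + l) | (y < k)%N]|).
    by rewrite card_lt (elimT minn_idPl (leq_addr l k)).
  by apply: eq_card => y; rewrite inE.
apply/setP=> y; rewrite inE; apply/imsetP/idP.
  by move=> [x]; rewrite inE => hx ->.
by move=> hy; exists (v^-1%g y); rewrite ?inE /S1 permKV.
Qed.

Lemma cardS2 : #|[pred x | ~~ S1 x]| = l.
Proof.
have := cardC [pred x | S1 x]; rewrite cardS1 card_ord => /addnI h.
by apply: etrans h; apply: eq_card => x; rewrite !inE.
Qed.

Lemma rk1_lt x : S1 x -> (rk1 x < k)%N.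
Proof.
move=> sx; rewrite -cardS1; apply: proper_card; apply/properP; split.
  by apply/subsetP=> y; rewrite !inE => /andP [].
by exists x; rewrite !inE ?sx // ltnn andbF.
Qed.

Lemma rk2_lt x : ~~ S1 x -> (rk2 x < l)%N.
Proof.
move=> sx; rewrite -cardS2; apply: proper_card; apply/properP; split.
  by apply/subsetP=> y; rewrite !inE => /andP [].
by exists x; rewrite !inE ?sx // ltnn andbF.
Qed.

Lemma zval_lt x : (zval x < k + l)%N.
Proof.
rewrite /zval; case: ifP => sx.
  exact: leq_trans (rk1_lt sx) (leq_addr l k).
by rewrite ltn_add2l rk2_lt ?sx.
Qed.

Lemma zval_S1 x : (zval x < k)%N = S1 x.
Proof.
rewrite /zval; case: ifP => sx; first exact: rk1_lt.
by rewrite ltnNge leq_addr.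
Qed.

Lemma zval_mono (x y : 'I_(k + l)) : (x < y)%N -> S1 x = S1 y -> (zval x < zval y)%N.
Proof.
move=> xy e; rewrite /zval -e.
case: (boolP (S1 x)) => sx.
  apply: proper_card; apply/properP; split.
    by apply/subsetP=> w; rewrite !inE => /andP [-> /ltn_trans]; apply.
  by exists x; rewrite !inE ?sx ?xy // ltnn andbF.
rewrite ltn_add2l; apply: proper_card; apply/properP; split.
  by apply/subsetP=> w; rewrite !inE => /andP [-> /ltn_trans]; apply.
by exists x; rewrite !inE ?sx ?xy // ltnn andbF.
Qed.

Lemma zval_inj : injective (fun x => Ordinal (zval_lt x)).
Proof.
move=> x y /(congr1 val) /= e.
case: (eqVneq (S1 x) (S1 y)) => [sxy|]; last by rewrite -!zval_S1 e eqxx.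
case: (ltngtP x y) => [xy|yx|]; last by move/val_inj.
  by have := zval_mono xy sxy; rewrite e ltnn.
by have := zval_mono yx (esym sxy); rewrite e ltnn.
Qed.

Definition zp := perm zval_inj.

Lemma zpE x : val (zp x) = zval x.
Proof. by rewrite permE. Qed.

Lemma zp_shuffle : shuffle k l zp.
Proof.
apply/forallP=> i; apply/forallP=> j; apply/implyP=> /andP [ij b].
set x := zp^-1%g i; set y := zp^-1%g j.
have ei : val i = zval x by rewrite -zpE /x permKV.
have ej : val j = zval y by rewrite -zpE /y permKV.
have sxy : S1 x = S1 y.
  rewrite -!zval_S1 -ei -ej; case/orP: b => h.
    by rewrite h (ltn_trans ij h).
  by rewrite !ltnNge h (leq_trans h (ltnW ij)).
case: (ltngtP x y) => // [yx|e].
  by have := zval_mono yx (esym sxy); rewrite -ei -ej ltnNge (ltnW ij).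
by move: ij; rewrite ei ej (val_inj e) ltnn.
Qed.

Lemma zpL (c : 'I_k) : (v (zp^-1%g (lshift l c)) < k)%N.
Proof.
have : S1 (zp^-1%g (lshift l c)) by rewrite -zval_S1 -zpE permKV /= ltn_ord.
by [].
Qed.

Lemma zpR (c : 'I_l) : (k <= v (zp^-1%g (rshift k c)))%N.
Proof.
have : ~~ S1 (zp^-1%g (rshift k c)) by rewrite -zval_S1 -zpE permKV /= -leqNgt leq_addr.
by rewrite /S1 -leqNgt.
Qed.

Definition r1f (c : 'I_k) : 'I_k := Ordinal (zpL c).
Definition r2f (c : 'I_l) : 'I_l := Ordinal (split_subproof (zpR c)).

Lemma r1f_inj : injective r1f.
Proof.
move=> c d /(congr1 val) /= /val_inj /perm_inj /perm_inj; exact: lshift_inj.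
Qed.

Lemma r2f_inj : injective r2f.
Proof.
move=> c d /(congr1 val) /= e.
have : nat_of_ord (v (zp^-1%g (rshift k c))) = nat_of_ord (v (zp^-1%g (rshift k d))).
  by rewrite -(subnK (zpR c)) -(subnK (zpR d)) e.
by move/ord_inj/perm_inj/perm_inj; exact: rshift_inj.
Qed.

Definition r1 := perm r1f_inj.
Definition r2 := perm r2f_inj.

Lemma decompE : v = (zp * ptensor r1 r2)%g.
Proof.
suff H : forall y, v (zp^-1%g y) = ptensor r1 r2 y.
  by apply/permP=> x; rewrite permM -H permK.
apply: ordLR => c.
  by rewrite ptensorL; apply: val_inj => /=; rewrite [r1 c]permE.
rewrite ptensorR; apply: val_inj => /=; rewrite [r2 c]permE /=.
by rewrite subnKC // zpR.
Qed.
End Decomp.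

Lemma decomp k l (v : 'S_(k + l)) :
  exists z r1 r2, shuffle k l z /\ v = (z * ptensor r1 r2)%g.
Proof. exists (zp v), (r1 v), (r2 v); split; [exact: zp_shuffle | exact: decompE]. Qed.
Section Main.
Variable R : fieldType.

Lemma sum_nz (I : finType) (P : pred I) (F : I -> R) :
  (\sum_(i | P i) F i) != 0 -> exists i, P i /\ F i != 0.
Proof.
move=> nz; apply: NNPP => N; move: nz; rewrite big1 ?eqxx // => i Pi.
by apply/eqP; apply/negPn/negP=> Fi; apply: N; exists i.
Qed.

Lemma sum_ind (T : finType) (a : T) (F : T -> R) :
  \sum_q ((a == q)%:R * F q) = F a.
Proof.
rewrite (bigD1 a) //= eqxx mul1r big1 ?addr0 // => q nq.
by rewrite eq_sym (negbTE nq) mul0r.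
Qed.

Lemma theta_relabel n (pi : 'S_n) (X : Hn R n) u :
  (forall p, X p != 0 -> hrel p /\ hrel (relabel pi p)) ->
  in_Hho (relabel_act pi X) /\ theta (relabel_act pi X) u = theta X (u * pi^-1)%g.
Proof.
move=> H.
have hX : in_Hho X by move=> p /H [/heapP].
have hR : in_Hho (relabel_act pi X).
  move=> q; rewrite ffunE => /sum_nz [p [_ nz]].
  case: (eqVneq (relabel pi p) q) => [<-|]; last by move=> ne; rewrite (negbTE ne) mulr0 eqxx in nz.
  by apply/heapP; apply: (proj2 (H p _)); apply: contraNneq nz => ->; rewrite mul0r.
split => //.
rewrite (theta_Hho u hR).
apply: etrans _ (esym (theta_Hho _ hX)).
rewrite (eq_bigr (fun q => \sum_p X p * ((relabel pi p == q)%:R * (SF q u)%:R))); last first.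
  by move=> q _; rewrite ffunE mulr_suml; apply: eq_bigr => p _; rewrite mulrA.
rewrite exchange_big /=; apply: eq_bigr => p _.
rewrite -mulr_sumr sum_ind.
case: (eqVneq (X p) 0) => [->|nz]; first by rewrite !mul0r.
by have [h1 h2] := H p nz; rewrite SF_relabel.
Qed.

Lemma hmul_supp k l (x : Hn R k) (y : Hn R l) q : in_Hho x -> in_Hho y ->
  hmul x y q != 0 -> exists p1 p2, [/\ hrel p1, hrel p2, x p1 != 0, y p2 != 0 & join p1 p2 = q].
Proof.
move=> hx hy; rewrite ffunE => /sum_nz [p1 [_ /sum_nz [p2 [_ nz]]]].
case: (eqVneq (join p1 p2) q) => [E|ne]; last by rewrite (negbTE ne) mulr0 eqxx in nz.
have x1 : x p1 != 0 by apply: contraNneq nz => ->; rewrite !mul0r.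
have y2 : y p2 != 0 by apply: contraNneq nz => ->; rewrite mulr0 mul0r.
by exists p1, p2; split => //; apply/heapP; [apply: hx | apply: hy].
Qed.

Lemma hmul_Hho k l (x : Hn R k) (y : Hn R l) : in_Hho x -> in_Hho y -> in_Hho (hmul x y).
Proof.
move=> hx hy q /(hmul_supp hx hy) [p1 [p2 [h1 h2 _ _ <-]]].
by apply/heapP; apply: join_heap.
Qed.

Lemma theta_hmul k l (x : Hn R k) (y : Hn R l) z r1 r2 :
  in_Hho x -> in_Hho y -> shuffle k l z ->
  theta (hmul x y) (z * ptensor r1 r2)%g = theta x r1 * theta y r2.
Proof.
move=> hx hy sz.
rewrite (theta_Hho _ (hmul_Hho hx hy)) (theta_Hho _ hx) (theta_Hho _ hy) big_distrlr /=.
rewrite (eq_bigr (fun q => \sum_p1 \sum_p2 x p1 * y p2 * ((join p1 p2 == q)%:R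
            * (SF q (z * ptensor r1 r2)%g)%:R))); last first.
  move=> q _; rewrite ffunE mulr_suml; apply: eq_bigr => p1 _.
  by rewrite mulr_suml; apply: eq_bigr => p2 _; rewrite mulrA.
rewrite exchange_big /=; apply: eq_bigr => p1 _.
rewrite exchange_big /=; apply: eq_bigr => p2 _.
rewrite -mulr_sumr sum_ind.
case: (eqVneq (x p1) 0) => [->|n1]; first by rewrite !mul0r.
case: (eqVneq (y p2) 0) => [->|n2]; first by rewrite !(mulr0, mul0r).
have /heapP h1 := hx _ n1; have /heapP h2 := hy _ n2.
rewrite SF_join //.
by case: (SF p1 r1); case: (SF p2 r2); rewrite /= ?(mulr1, mulr0, mul0r, mul1r) // mulrACA.
Qed.
End Main.

Unset Implicit Arguments.

Theorem mainTheorem10 (R : fieldType) (k l : nat) (s : 'S_k) (t : 'S_l)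
    (e : 'S_(k + l)) :
  shuffle k l e ->
  in_Hho (relabel_act e^-1%g (hmul (Tsig R s) (Tsig R t))) /\
  relabel_act e^-1%g (hmul (Tsig R s) (Tsig R t)) =
    \sum_(z : 'S_(k + l) | shuffle k l z)
       Tsig R (permcomp (permcomp z^-1%g (ptensor s t)) e).
Proof.
move=> se.
have [hs ths] := Tsig_ok R s; have [ht tht] := Tsig_ok R t.
set X := hmul (Tsig R s) (Tsig R t).
have HX : forall p, X p != 0 -> hrel p /\ hrel (relabel e^-1%g p).
  move=> p /(hmul_supp hs ht) [p1 [p2 [h1 h2 _ _ <-]]]; split; first exact: join_heap.
  apply: relabel_heap; apply: ordLR => [a|b] u.
    rewrite joinL; case E : (p1 a) => [w|] //= [<-].
    by rewrite shufL //; apply: h1 E.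
  rewrite joinR; case E : (p2 b) => [w|] //= [<-].
  by rewrite shufR //; apply: h2 E.
have hL := proj1 (theta_relabel 1%g HX).
split => //.
set Y := \sum_(z | _) _.
have hRHS : in_Hho Y by apply: Hho_sum => z _; exact: (proj1 (Tsig_ok R _)).
apply/eqP; rewrite -subr_eq0; apply/eqP; apply: theta_inj; first exact: HhoB.
rewrite thetaB theta_sum; apply/ffunP=> u; rewrite [LHS]ffunE [RHS]ffunE [Z in _ + Z]ffunE sum_ffunE.
rewrite (proj2 (theta_relabel u HX)) invgK.
have [z0 [r1 [r2 [sz0 E]]]] := decomp (u * e)%g.
rewrite E theta_hmul // ths tht !ffunE.
set P := ptensor s t.
rewrite (eq_bigr (fun z => ((z == u * e * P)%g)%:R)); last first.
  move=> z _; rewrite (proj2 (Tsig_ok R _)) ffunE /permcomp !invMg invgK.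
  congr (_%:R); case: (eqVneq u (z * P^-1 * e^-1)%g) => [->|ne].
    by rewrite !mulgKV eqxx.
  case: (eqVneq z (u * e * P)%g) => // h; move: ne; by rewrite h !mulgK eqxx.
have W : (u * e * P)%g = (z0 * ptensor (r1 * s) (r2 * t))%g.
  by rewrite E -mulgA ptensorM.
rewrite W.
have -> : \sum_(z | shuffle k l z) ((z == z0 * ptensor (r1 * s) (r2 * t))%g)%:R
          = (shuffle k l (z0 * ptensor (r1 * s) (r2 * t))%g)%:R :> R.
  case: (boolP (shuffle k l _)) => sw.
    rewrite (bigD1 (z0 * ptensor (r1 * s) (r2 * t))%g) //= eqxx big1 ?addr0 //.
    by move=> z /andP [_ nz]; rewrite (negbTE nz).
  rewrite big1 // => z sz; case: eqVneq => // ez.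
  by rewrite -ez sz in sw.
case: (boolP (shuffle k l _)) => sw.
  have [e1 e2] := shuf_uniq sz0 sw.
  have -> : r1 = s^-1%g by rewrite -(mulgK s r1) e1 mul1g.
  have -> : r2 = t^-1%g by rewrite -(mulgK t r2) e2 mul1g.
  by rewrite !eqxx mulr1 subrr.
case: (eqVneq r1 s^-1%g) => [e1|]; last by rewrite mul0r subr0.
case: (eqVneq r2 t^-1%g) => [e2|]; last by rewrite mulr0 subr0.
by move: sw; rewrite e1 e2 !mulVg ptensor1 mulg1 sz0.
Qed.
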